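(* Let $G_1^o,G_2^o$ be ordered abelian groups and $H_1,H_2$ abelian groups endowed with valuational quasi-orders. Then $G_1^o\boxtimes H_1\equiv G_2^o\boxtimes H_2$ if and only if $G_1^o\equiv G_2^o$ and $H_1\equiv H_2$, where elementary equivalence is in the language $\{0,+,-,\precsim\}$.
   Context: A quasi-order $\precsim$ on an abelian group $H$ is valuational if $a\precsim b\Leftrightarrow w(b)\le w(a)$ for some valuation $w$ on $H$ (a map $w:H\to\Delta\cup\{\infty\}$, $\Delta$ totally ordered, with $w(a)=\infty\Leftrightarrow a=0$, $w(a+b)\ge\min(w(a),w(b))$, $w(-a)=w(a)$). For an ordered abelian group $(A,\le)$ and an abelian group $H$ with a valuational quasi-order $\precsim_H$, the compatible product $A\boxtimes H$ is the group $A\times H$ with the quasi-order $(a,h)\precsim(a',h')\Leftrightarrow(h=h'=0\wedge a\le a')\vee(h'\neq0\wedge h\precsim_H h')$. An ordered group is viewed as an $\{0,+,-,\precsim\}$-structure with $\precsim$ interpreted as its order, a valuationally quasi-ordered group with $\precsim$ interpreted as its quasi-order; $-$ is unary negation. *)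

(* Defs.v *)
From HB Require Import structures.
From mathcomp Require Import all_boot all_order all_algebra.
Set Implicit Arguments. Unset Strict Implicit. Unset Printing Implicit Defensive.
Import Order.TTheory GRing.Theory.
Local Open Scope ring_scope.

Record LStruct := MkLStruct {
  carrier :> Type;
  s_zero : carrier;
  s_add : carrier -> carrier -> carrier;
  s_opp : carrier -> carrier;
  s_rel : carrier -> carrier -> Prop }.

Inductive term : Type :=
  | tvar : nat -> term
  | tzero : term
  | tadd : term -> term -> term
  | topp : term -> term.

Inductive formula : Type :=
  | ffalse : formula
  | feq : term -> term -> formula
  | frel : term -> term -> formula
  | fnot : formula -> formula
  | fand : formula -> formula -> formula
  | for_ : formula -> formula -> formula
  | fimp : formula -> formula -> formula
  | fall : nat -> formula -> formula
  | fex : nat -> formula -> formula.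

Fixpoint teval (M : LStruct) (e : nat -> M) (t : term) : M :=
  match t with
  | tvar i => e i
  | tzero => s_zero M
  | tadd t1 t2 => s_add (teval e t1) (teval e t2)
  | topp t1 => s_opp (teval e t1)
  end.

Definition upd (M : LStruct) (e : nat -> M) (i : nat) (x : M) : nat -> M :=
  fun j => if j == i then x else e j.

Fixpoint sat (M : LStruct) (e : nat -> M) (f : formula) : Prop :=
  match f with
  | ffalse => False
  | feq t1 t2 => @teval M e t1 = @teval M e t2
  | frel t1 t2 => @s_rel M (@teval M e t1) (@teval M e t2)
  | fnot g => ~ @sat M e g
  | fand g h => @sat M e g /\ @sat M e h
  | for_ g h => @sat M e g \/ @sat M e h
  | fimp g h => @sat M e g -> @sat M e h
  | fall i g => forall x : M, @sat M (upd e i x) g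
  | fex i g => exists x : M, @sat M (upd e i x) g
  end.

Fixpoint tfree (i : nat) (t : term) : bool :=
  match t with
  | tvar j => j == i
  | tzero => false
  | tadd t1 t2 => tfree i t1 || tfree i t2
  | topp t1 => tfree i t1
  end.

Fixpoint ffree (i : nat) (f : formula) : bool :=
  match f with
  | ffalse => false
  | feq t1 t2 | frel t1 t2 => tfree i t1 || tfree i t2
  | fnot g => ffree i g
  | fand g h | for_ g h | fimp g h => ffree i g || ffree i h
  | fall j g | fex j g => (i != j) && ffree i g
  end.

Definition sentence (f : formula) : Prop := forall i, ~~ ffree i f.

(** Truth of a sentence (the environment is irrelevant for sentences;
    we use the constant-zero environment). *)
Definition models (M : LStruct) (f : formula) : Prop := @sat M (fun _ => s_zero M) f.

Definition elem_equiv (M N : LStruct) : Prop :=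
  forall f, sentence f -> (models M f <-> models N f).

Definition ordered_group (G : zmodType) (le : G -> G -> Prop) : Prop :=
  [/\ (forall a, le a a),
      (forall a b, le a b -> le b a -> a = b),
      (forall a b c, le a b -> le b c -> le a c),
      (forall a b, le a b \/ le b a)
    & (forall a b c, le a b -> le (a + c) (b + c))].

(** * Valuations and valuational quasi-orders.
    A valuation takes values in Δ ∪ {∞}, encoded as [option Δ] with [None = ∞]. *)
Definition le_inf (d : Order.disp_t) (D : orderType d) (x y : option D) : bool :=
  match x, y with
  | _, None => true
  | None, Some _ => false
  | Some a, Some b => (a <= b)%O
  end.

Definition is_valuation (H : zmodType) (d : Order.disp_t) (D : orderType d)
    (w : H -> option D) : Prop :=
  [/\ (forall a, w a = None <-> a = 0),
      (forall a b, le_inf (w a) (w (a + b)) || le_inf (w b) (w (a + b)))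
    & (forall a, w (- a) = w a)].

Definition valuational (H : zmodType) (qo : H -> H -> Prop) : Prop :=
  exists (d : Order.disp_t) (D : orderType d) (w : H -> option D),
    is_valuation w /\ (forall a b, qo a b <-> le_inf (w b) (w a)).

Definition grp_struct (G : zmodType) (r : G -> G -> Prop) : LStruct :=
  @MkLStruct G 0 (fun a b => a + b) (fun a => - a) r.

Definition boxtimes_rel (A H : zmodType) (le : A -> A -> Prop) (qo : H -> H -> Prop)
    (x y : A * H) : Prop :=
  (x.2 = 0 /\ y.2 = 0 /\ le x.1 y.1) \/ (y.2 <> 0 /\ qo x.2 y.2).

Definition boxtimes (A H : zmodType) (le : A -> A -> Prop) (qo : H -> H -> Prop)
    : LStruct :=
  @MkLStruct (A * H)%type (0, 0)
    (fun x y => (x.1 + y.1, x.2 + y.2)) (fun x => (- x.1, - x.2))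
    (boxtimes_rel le qo).

(* Main.v *)
From Pilot Require Import Defs.
From mathcomp Require Import all_boot all_order all_algebra.
From Stdlib Require Import Classical.
Import Pilot.Defs.
Set Implicit Arguments. Unset Strict Implicit. Unset Printing Implicit Defensive.
Import GRing.Theory.
Local Open Scope ring_scope.

Lemma teval_ext (M : LStruct) (e e' : nat -> M) t :
  (forall j, e j = e' j) -> teval e t = teval e' t.
Proof. move=> E; elim: t => //= [t1 -> t2 -> | t1 ->] //. Qed.

Lemma sat_ext (M : LStruct) f : forall (e e' : nat -> M),
  (forall j, e j = e' j) -> sat e f <-> sat e' f.
Proof.
elim: f => /=.
- by [].
- by move=> t1 t2 e e' E; rewrite !(teval_ext _ E).
- by move=> t1 t2 e e' E; rewrite !(teval_ext _ E).
- by move=> g IH e e' E; rewrite (IH e e' E).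
- by move=> g IHg h IHh e e' E; rewrite (IHg e e' E) (IHh e e' E).
- by move=> g IHg h IHh e e' E; rewrite (IHg e e' E) (IHh e e' E).
- by move=> g IHg h IHh e e' E; rewrite (IHg e e' E) (IHh e e' E).
- move=> i g IH e e' E; split=> H x; [rewrite -(IH (upd e i x))|rewrite (IH _ (upd e' i x))] => //;
  by move=> j; rewrite /upd; case: (j == i).
- move=> i g IH e e' E; split=> -[x Hx]; exists x; [rewrite -(IH (upd e i x))|rewrite (IH _ (upd e' i x))] => //;
  by move=> j; rewrite /upd; case: (j == i).
Qed.

Lemma sat_ext1 (M : LStruct) f (e e' : nat -> M) :
  (forall j, e j = e' j) -> sat e f -> sat e' f.
Proof. by move=> E; rewrite (sat_ext _ E). Qed.

Definition ftrue := fnot ffalse.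

Fixpoint DS (M N : LStruct) (eM : nat -> M) (eN : nat -> N) (L : seq (formula * formula)) : Prop :=
  match L with
  | [::] => False
  | p :: t => (sat eM p.1 /\ sat eN p.2) \/ DS eM eN t
  end.

Fixpoint conjL (L1 L2 : seq (formula * formula)) : seq (formula * formula) :=
  match L1 with
  | [::] => [::]
  | p :: t => map (fun q => (fand p.1 q.1, fand p.2 q.2)) L2 ++ conjL t L2
  end.

Definition negP (p : formula * formula) := [:: (fnot p.1, ftrue); (ftrue, fnot p.2)].
Definition negL (L : seq (formula * formula)) :=
  foldr (fun p acc => conjL (negP p) acc) [:: (ftrue, ftrue)] L.
Definition exL i (L : seq (formula * formula)) := map (fun p => (fex i p.1, fex i p.2)) L.

Fixpoint Trans (f : formula) : seq (formula * formula) :=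
  match f with
  | ffalse => [::]
  | feq t1 t2 => [:: (feq t1 t2, feq t1 t2)]
  | frel t1 t2 => [:: (frel t1 t2, fand (feq t1 tzero) (feq t2 tzero));
                     (ftrue, fand (fnot (feq t2 tzero)) (frel t1 t2))]
  | fnot g => negL (Trans g)
  | fand g h => conjL (Trans g) (Trans h)
  | for_ g h => Trans g ++ Trans h
  | fimp g h => negL (Trans g) ++ Trans h
  | fall i g => negL (exL i (negL (Trans g)))
  | fex i g => exL i (Trans g)
  end.

Section DSL.
Variables (M N : LStruct).

Lemma DS_cat (eM : nat -> M) (eN : nat -> N) L1 L2 :
  DS eM eN (L1 ++ L2) <-> DS eM eN L1 \/ DS eM eN L2.
Proof. elim: L1 => /= [|p t IH]; [tauto|rewrite IH; tauto]. Qed.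

Lemma DS_map (eM : nat -> M) (eN : nat -> N) p L :
  DS eM eN (map (fun q => (fand p.1 q.1, fand p.2 q.2)) L) <->
  (sat eM p.1 /\ sat eN p.2) /\ DS eM eN L.
Proof. elim: L => /= [|q t IH]; [tauto|rewrite IH; tauto]. Qed.

Lemma DS_conj (eM : nat -> M) (eN : nat -> N) L1 L2 :
  DS eM eN (conjL L1 L2) <-> DS eM eN L1 /\ DS eM eN L2.
Proof. elim: L1 => /= [|p t IH]; [tauto|rewrite DS_cat DS_map IH; tauto]. Qed.

Lemma DS_neg (eM : nat -> M) (eN : nat -> N) L :
  DS eM eN (negL L) <-> ~ DS eM eN L.
Proof.
elim: L => [|p t IH]; first by rewrite /=; tauto.
have -> : negL (p :: t) = conjL (negP p) (negL t) by [].
rewrite DS_conj IH /=.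
case: (classic (sat eM p.1)); case: (classic (sat eN p.2)); tauto.
Qed.

Lemma DS_ex (eM : nat -> M) (eN : nat -> N) i L :
  DS eM eN (exL i L) <-> exists x y, DS (upd eM i x) (upd eN i y) L.
Proof.
elim: L => /= [|p t IH]; first by split=> // -[x [y []]].
rewrite IH; split.
- case=> [[[x Hx] [y Hy]] | [x [y H]]]; exists x, y; tauto.
- case=> x [y [[H1 H2]|H]]; [left; split; [exists x|exists y]|right; exists x, y]; tauto.
Qed.

Lemma DS_ext (eM eM' : nat -> M) (eN eN' : nat -> N) L :
  (forall j, eM j = eM' j) -> (forall j, eN j = eN' j) ->
  DS eM eN L <-> DS eM' eN' L.
Proof.
move=> E1 E2; elim: L => /= [|p t IH]; first tauto.
by rewrite (sat_ext _ E1) (sat_ext _ E2) IH.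
Qed.
Lemma DS_ext1 (eM eM' : nat -> M) (eN eN' : nat -> N) L :
  (forall j, eM j = eM' j) -> (forall j, eN j = eN' j) ->
  DS eM eN L -> DS eM' eN' L.
Proof. by move=> E1 E2; rewrite (DS_ext L E1 E2). Qed.
End DSL.

Section Prod.
Variables (A H : zmodType) (le : A -> A -> Prop) (qo : H -> H -> Prop).
Notation P := (boxtimes le qo).
Notation GA := (grp_struct le).
Notation GH := (grp_struct qo).

Lemma teval_split (e : nat -> P) t :
  teval e t = (@teval GA (fun j => (e j).1) t, @teval GH (fun j => (e j).2) t).
Proof.
elim: t => /= [i|//|t1 -> t2 ->|t1 ->] //.
by case: (e i).
Qed.

Lemma Trans_ok f : forall (e : nat -> P),
  sat e f <-> DS (M := GA) (N := GH) (fun j => (e j).1) (fun j => (e j).2) (Trans f).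
Proof.
elim: f => /=.
- by move=> e; tauto.
- move=> t1 t2 e; rewrite !teval_split; split.
  + by case=> -> ->; tauto.
  + by case=> // -[-> ->].
- move=> t1 t2 e; rewrite /boxtimes_rel !teval_split /=; tauto.
- by move=> g IH e; rewrite DS_neg IH.
- by move=> g IHg h IHh e; rewrite DS_conj IHg IHh.
- by move=> g IHg h IHh e; rewrite DS_cat IHg IHh.
- move=> g IHg h IHh e; rewrite DS_cat DS_neg IHg IHh.
  case: (classic (DS (M := GA) (N := GH) (fun j => (e j).1) (fun j => (e j).2) (Trans g))); tauto.
- move=> i g IH e; rewrite DS_neg DS_ex; split.
  + move=> Hall [x [y]]; rewrite DS_neg => Hn; apply: Hn.
    have := Hall (x, y); rewrite IH; apply: DS_ext1 => j; rewrite /upd; by case: (j == i).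
  + move=> Hn x; rewrite IH; apply: NNPP => Hc; apply: Hn; exists x.1, x.2.
    rewrite DS_neg => Hd; apply: Hc; move: Hd; apply: DS_ext1 => j; rewrite /upd; by case: (j == i).
- move=> i g IH e; rewrite DS_ex; split.
  + case=> x; rewrite IH => Hx; exists x.1, x.2; move: Hx; apply: DS_ext1 => j; rewrite /upd; by case: (j == i).
  + case=> x [y Hd]; exists (x, y); rewrite IH; move: Hd; apply: DS_ext1 => j; rewrite /upd; by case: (j == i).
Qed.
End Prod.

Definition okL i (L : seq (formula * formula)) :=
  all (fun p => ~~ ffree i p.1 && ~~ ffree i p.2) L.

Lemma okL_cat i L1 L2 : okL i (L1 ++ L2) = okL i L1 && okL i L2.
Proof. by rewrite /okL all_cat. Qed.

Lemma okL_map i p L2 : ~~ ffree i p.1 -> ~~ ffree i p.2 -> okL i L2 ->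
  okL i (map (fun q => (fand p.1 q.1, fand p.2 q.2)) L2).
Proof.
move=> h1 h2; elim: L2 => //= q s IHs /andP[/andP[k1 k2] ks].
by rewrite /= negb_or h1 k1 negb_or h2 k2 IHs.
Qed.

Lemma okL_conj i L1 L2 : okL i L1 -> okL i L2 -> okL i (conjL L1 L2).
Proof.
elim: L1 => //= p t IH /andP[/andP[h1 h2] ht] h.
by rewrite okL_cat IH // andbT okL_map.
Qed.

Lemma okL_neg i L : okL i L -> okL i (negL L).
Proof.
elim: L => // p t IH /andP[/andP[h1 h2] ht].
have -> : negL (p :: t) = conjL (negP p) (negL t) by [].
by apply: okL_conj; [rewrite /okL /= h1 h2| apply: IH].
Qed.

Lemma okL_ex i j L : (i == j) || okL i L -> okL i (exL j L).
Proof.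
case/orP=> [/eqP ->|].
- by elim: L => //= p t IH; rewrite !eqxx.
- elim: L => //= p t IH /andP[/andP[h1 h2] ht].
  by rewrite (negbTE h1) (negbTE h2) !andbF IH.
Qed.

Lemma Trans_free i f : ~~ ffree i f -> okL i (Trans f).
Proof.
elim: f => /=.
- by [].
- by move=> t1 t2; rewrite negb_or => /andP[a b]; rewrite /okL /= (negbTE a) (negbTE b).
- by move=> t1 t2; rewrite negb_or => /andP[a b]; rewrite /okL /= (negbTE a) (negbTE b).
- by move=> g IH h; apply: okL_neg; apply: IH.
- by move=> g IHg h IHh; rewrite negb_or => /andP[a b]; apply: okL_conj; auto.
- by move=> g IHg h IHh; rewrite negb_or => /andP[a b]; rewrite okL_cat IHg ?IHh.
- by move=> g IHg h IHh; rewrite negb_or => /andP[a b]; rewrite okL_cat okL_neg ?IHg ?IHh.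
- move=> j g IH; rewrite negb_and negbK => Hf; apply: okL_neg; apply: okL_ex.
  case/orP: Hf => [->//|Hf]; by rewrite okL_neg ?orbT ?IH.
- move=> j g IH; rewrite negb_and negbK => Hf; apply: okL_ex.
  case/orP: Hf => [->//|Hf]; by rewrite IH ?orbT.
Qed.

Lemma DS_sent (M1 M2 N1 N2 : LStruct) L :
  (forall i, okL i L) -> elem_equiv M1 M2 -> elem_equiv N1 N2 ->
  DS (fun _ => s_zero M1) (fun _ => s_zero N1) L <->
  DS (fun _ => s_zero M2) (fun _ => s_zero N2) L.
Proof.
move=> Hok EM EN; elim: L Hok => //= p t IH Hok.
have h1 : sentence p.1 by move=> i; have /andP[/andP[]] := Hok i.
have h2 : sentence p.2 by move=> i; have /andP[/andP[]] := Hok i.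
have ht : forall i, okL i t by move=> i; have /andP[] := Hok i.
rewrite (IH ht).
have := EM _ h1; have := EN _ h2; rewrite /models; tauto.
Qed.

Definition Zf t := for_ (frel t tzero) (frel (topp t) tzero).
Arguments Zf : simpl never.

Fixpoint trG (f : formula) : formula :=
  match f with
  | ffalse => ffalse
  | feq t1 t2 => feq t1 t2
  | frel t1 t2 => frel t1 t2
  | fnot g => fnot (trG g)
  | fand g h => fand (trG g) (trG h)
  | for_ g h => for_ (trG g) (trG h)
  | fimp g h => fimp (trG g) (trG h)
  | fall i g => fall i (fimp (Zf (tvar i)) (trG g))
  | fex i g => fex i (fand (Zf (tvar i)) (trG g))
  end.

Fixpoint trH (f : formula) : formula :=
  match f with
  | ffalse => ffalse
  | feq t1 t2 => Zf (tadd t1 (topp t2))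
  | frel t1 t2 => for_ (fand (Zf t2) (Zf t1)) (fand (fnot (Zf t2)) (frel t1 t2))
  | fnot g => fnot (trH g)
  | fand g h => fand (trH g) (trH h)
  | for_ g h => for_ (trH g) (trH h)
  | fimp g h => fimp (trH g) (trH h)
  | fall i g => fall i (trH g)
  | fex i g => fex i (trH g)
  end.

Lemma trG_free i f : ~~ ffree i f -> ~~ ffree i (trG f).
Proof.
elim: f => //=.
- by move=> g IHg h IHh; rewrite !negb_or => /andP[a b]; rewrite IHg ?IHh.
- by move=> g IHg h IHh; rewrite !negb_or => /andP[a b]; rewrite IHg ?IHh.
- by move=> g IHg h IHh; rewrite !negb_or => /andP[a b]; rewrite IHg ?IHh.
- move=> j g IH; case: (eqVneq i j) => [?|ne] //=; exact: IH.
- move=> j g IH; case: (eqVneq i j) => [?|ne] //=; exact: IH.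
Qed.

Lemma trH_free i f : ~~ ffree i f -> ~~ ffree i (trH f).
Proof.
elim: f => //=.
- by move=> t1 t2; rewrite !negb_or => /andP[a b]; rewrite a b.
- by move=> t1 t2; rewrite !negb_or => /andP[a b]; rewrite a b.
- by move=> g IHg h IHh; rewrite !negb_or => /andP[a b]; rewrite IHg ?IHh.
- by move=> g IHg h IHh; rewrite !negb_or => /andP[a b]; rewrite IHg ?IHh.
- by move=> g IHg h IHh; rewrite !negb_or => /andP[a b]; rewrite IHg ?IHh.
- by move=> j g IH; rewrite !negb_and !negbK; case/orP=> [->//|/IH ->]; rewrite orbT.
- by move=> j g IH; rewrite !negb_and !negbK; case/orP=> [->//|/IH ->]; rewrite orbT.
Qed.

Section Interp.
Variables (A H : zmodType) (le : A -> A -> Prop) (qo : H -> H -> Prop).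
Hypothesis og : ordered_group le.
Notation P := (boxtimes le qo).
Notation GA := (grp_struct le).
Notation GH := (grp_struct qo).

Lemma Zf_ok (e : nat -> P) t : sat e (Zf t) <-> (teval e t).2 = 0.
Proof.
rewrite /Zf /= /boxtimes_rel /=.
case: (teval e t) => a h /=; split.
- case=> [[[h0 _]|[]]|[[h0 _]|[]]] //.
  by apply/eqP; rewrite -oppr_eq0; apply/eqP.
- move=> ->; case: og => _ _ _ tot tr.
  case: (tot a 0) => Ha; [left; left; tauto|].
  right; left; rewrite oppr0; split=> //; split=> //.
  by have := tr _ _ (- a) Ha; rewrite add0r subrr.
Qed.

Lemma Zf_ok2 (x : A * H) :
  (boxtimes_rel le qo x (0, 0) \/ boxtimes_rel le qo (- x.1, - x.2) (0, 0)) <-> x.2 = 0.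
Proof. exact: (@Zf_ok (fun _ => x) (tvar 0)). Qed.

Lemma teval_zero (e : nat -> GH) t : (forall j, e j = 0) -> teval e t = 0.
Proof.
move=> E; elim: t => /= [i|//|t1 -> t2 ->|t1 ->]; by rewrite ?E ?addr0 ?oppr0.
Qed.

Lemma trG_ok f : forall (e : nat -> P), (forall j, (e j).2 = 0) ->
  sat e (trG f) <-> @sat GA (fun j => (e j).1) f.
Proof.
elim: f => /=.
- by [].
- move=> t1 t2 e E; rewrite !teval_split !(@teval_zero _ _ E); split; [by case| by move=> ->].
- move=> t1 t2 e E; rewrite /boxtimes_rel !teval_split !(@teval_zero _ _ E) /=; tauto.
- by move=> g IH e E; rewrite IH.
- by move=> g IHg h IHh e E; rewrite IHg ?IHh.
- by move=> g IHg h IHh e E; rewrite IHg ?IHh.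
- by move=> g IHg h IHh e E; rewrite IHg ?IHh.
- move=> i g IH e E; split.
  + move=> Hx a; have := Hx (a, 0); rewrite Zf_ok2 /= /upd eqxx => /(_ erefl).
    rewrite IH; last by move=> j; rewrite /upd; case: (j == i).
    by apply: sat_ext1 => j; rewrite /upd; case: (j == i).
  + move=> Ha x; rewrite Zf_ok2 /= /upd eqxx => x0.
    rewrite IH; last by move=> j; rewrite /upd; case: (j == i).
    by have := Ha x.1; apply: sat_ext1 => j; rewrite /upd; case: (j == i).
- move=> i g IH e E; split.
  + case=> x []; rewrite Zf_ok2 /= /upd eqxx => x0.
    rewrite IH; last by move=> j; rewrite /upd; case: (j == i).
    by move=> Hs; exists x.1; move: Hs; apply: sat_ext1 => j; rewrite /upd; case: (j == i).
  + case=> a Ha; exists (a, 0); rewrite Zf_ok2 /= /upd eqxx; split=> //.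
    rewrite IH; last by move=> j; rewrite /upd; case: (j == i).
    by move: Ha; apply: sat_ext1 => j; rewrite /upd; case: (j == i).
Qed.

Hypothesis vq : valuational qo.

Lemma qo_zero h : qo h 0 <-> h = 0.
Proof.
case: vq => d [D [w [[Hw _ _] Hq]]].
rewrite Hq (proj2 (Hw 0) erefl) -Hw /=.
by case: (w h).
Qed.

Lemma trH_ok f : forall (e : nat -> P),
  sat e (trH f) <-> @sat GH (fun j => (e j).2) f.
Proof.
elim: f => /=.
- by [].
- move=> t1 t2 e; rewrite Zf_ok2 /= !teval_split /=; split.
  + by move/eqP; rewrite subr_eq0 => /eqP.
  + by move=> ->; rewrite subrr.
- move=> t1 t2 e; rewrite !Zf_ok2 /= !teval_split /=; rewrite /boxtimes_rel /=.
  set x := teval _ t1; set y := teval _ t2.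
  case: (eqVneq y 0) => [->|ny].
  + rewrite qo_zero; tauto.
  + have ny' : y <> 0 by apply/eqP.
    tauto.
- by move=> g IH e; rewrite IH.
- by move=> g IHg h IHh e; rewrite IHg IHh.
- by move=> g IHg h IHh e; rewrite IHg IHh.
- by move=> g IHg h IHh e; rewrite IHg IHh.
- move=> i g IH e; split.
  + move=> Hx h; have := Hx (0, h); rewrite IH.
    by apply: sat_ext1 => j; rewrite /upd; case: (j == i).
  + move=> Hh x; rewrite IH; have := Hh x.2.
    by apply: sat_ext1 => j; rewrite /upd; case: (j == i).
- move=> i g IH e; split.
  + case=> x; rewrite IH => Hs; exists x.2; move: Hs.
    by apply: sat_ext1 => j; rewrite /upd; case: (j == i).
  + case=> h Hh; exists (0, h); rewrite IH; move: Hh.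
    by apply: sat_ext1 => j; rewrite /upd; case: (j == i).
Qed.
End Interp.

Theorem mainTheorem17 (G1 G2 H1 H2 : zmodType)
    (le1 : G1 -> G1 -> Prop) (le2 : G2 -> G2 -> Prop)
    (qo1 : H1 -> H1 -> Prop) (qo2 : H2 -> H2 -> Prop) :
  ordered_group le1 -> ordered_group le2 ->
  valuational qo1 -> valuational qo2 ->
  (elem_equiv (boxtimes le1 qo1) (boxtimes le2 qo2) <->
   elem_equiv (grp_struct le1) (grp_struct le2) /\
   elem_equiv (grp_struct qo1) (grp_struct qo2)).
Proof.
move=> og1 og2 v1 v2; split.
- move=> EP; split.
  + move=> f sf.
    have st : sentence (trG f) by move=> i; apply: trG_free.
    have := EP _ st; rewrite /models.
    rewrite (@trG_ok _ _ le1 qo1 og1 f (fun _ => (0, 0))) //.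
    by rewrite (@trG_ok _ _ le2 qo2 og2 f (fun _ => (0, 0))).
  + move=> f sf.
    have st : sentence (trH f) by move=> i; apply: trH_free.
    have := EP _ st; rewrite /models.
    rewrite (@trH_ok _ _ le1 qo1 og1 v1 f (fun _ => (0, 0))).
    by rewrite (@trH_ok _ _ le2 qo2 og2 v2 f (fun _ => (0, 0))).
- move=> [EG EH] f sf; rewrite /models.
  rewrite (@Trans_ok _ _ le1 qo1 f (fun _ => (0, 0))).
  rewrite (@Trans_ok _ _ le2 qo2 f (fun _ => (0, 0))).
  apply: (DS_sent (M1 := grp_struct le1)) => // i.
  by apply: Trans_free.
Qed.
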